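(* Let $g_->0$ and let $\psi:[0,1]\to\mathbb{R}$ be $C^1$ with $\psi(0)=0$ and $0<\psi(z)\le\psi(1)$ for all $z\in(0,1)$. For $\sigma>0$, $c_0>0$ and $c_0'\in\mathbb{R}$ consider the Cauchy problem $$-c''+\psi\big(e^{g_-x/\sigma}\big)c=0\quad (x<0),\qquad c(0)=c_0,\quad c'(0)=c_0'.$$ Then there exists a continuous mapping $\sigma\mapsto A(\sigma)\in(0,\sqrt{\psi(1)}\,]$ on $(0,\infty)$ such that the solution of this Cauchy problem is defined, nonnegative and nondecreasing on $(-\infty,0]$ if and only if $c_0'=A(\sigma)c_0$. Moreover $$A(\sigma)\le\frac{\sigma}{g_-}\int_0^1\frac{\psi(\nu)}{\nu}\,d\nu\quad\text{for all }\sigma>0,$$ and $A$ extends continuously to $\sigma=0$ with $A(0)=0$.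
   Context: The integral $\int_0^1\psi(\nu)/\nu\,d\nu$ is finite since $\psi\in C^1([0,1])$ with $\psi(0)=0$. *)

(* Defs.v *)
From Stdlib Require Import Reals Lra.
Open Scope R_scope.

Definition has_deriv_within (D : R -> Prop) (f f' : R -> R) (x : R) : Prop :=
  limit1_in (fun y => (f y - f x) / (y - x)) (fun y => D y /\ y <> x) (f' x) x.

Definition in01 (x : R) : Prop := 0 <= x <= 1.

Definition C1_on_01 (psi : R -> R) : Prop :=
  exists dpsi : R -> R,
    (forall x, in01 x -> has_deriv_within in01 psi dpsi x) /\
    (forall x, in01 x -> limit1_in dpsi in01 (dpsi x) x).

Definition nonpos (x : R) : Prop := x <= 0.

Definition cauchy_sol (psi : R -> R) (gm sigma c0 c0' : R) (c : R -> R) : Prop :=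
  exists dc ddc : R -> R,
    (forall x, x <= 0 -> has_deriv_within nonpos c dc x) /\
    (forall x, x < 0 -> derivable_pt_lim dc x (ddc x)) /\
    (forall x, x < 0 -> - ddc x + psi (exp (gm * x / sigma)) * c x = 0) /\
    c 0 = c0 /\ dc 0 = c0'.

Definition nonneg_nondecr_on_nonpos (c : R -> R) : Prop :=
  (forall x, x <= 0 -> 0 <= c x) /\
  (forall x y, x <= y -> y <= 0 -> c x <= c y).

(* Main.v *)
Require Import Defs.
From Coquelicot Require Import Coquelicot.
From Stdlib Require Import Reals Lra Lia ClassicalEpsilon.
Open Scope R_scope.

Lemma lim_eps f D l x0 : limit1_in f D l x0 -> forall eps, 0 < eps -> exists del, 0 < del /\ forall y, D y -> Rabs (y - x0) < del -> Rabs (f y - l) < eps.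
Proof. intros H eps He. destruct (H eps He) as [del [Hd H2]]. exists del; split; auto.
intros y Dy Hy. apply (H2 y). split; auto. Qed.
Lemma eps_lim f D l x0 : (forall eps, 0 < eps -> exists del, 0 < del /\ forall y, D y -> Rabs (y - x0) < del -> Rabs (f y - l) < eps) -> limit1_in f D l x0.
Proof. intros H eps He. destruct (H eps He) as [del [Hd H2]]. exists del; split; auto.
intros y [Dy Hy]. apply H2; auto. Qed.
Lemma eps_cont f x : (forall eps, 0 < eps -> exists del, 0 < del /\ forall y, Rabs (y - x) < del -> Rabs (f y - f x) < eps) -> continuity_pt f x.
Proof. intros H. unfold continuity_pt, continue_in. apply eps_lim. intros eps He. destruct (H eps He) as [d [Hd H2]]. exists d; split; auto. Qed.
Lemma cont_eps f x : continuity_pt f x -> forall eps, 0 < eps -> exists del, 0 < del /\ forall y, Rabs (y - x) < del -> Rabs (f y - f x) < eps.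
Proof. intros H eps He. destruct (lim_eps _ _ _ _ H eps He) as [d [Hd H2]]. exists d; split; auto.
intros y Hy. destruct (Req_dec y x). subst. rewrite Rminus_diag, Rabs_R0; auto. apply H2; auto. split; [exact I|auto]. Qed.

Definition clamp (y : R) := Rmax 0 (Rmin 1 y).
Lemma clamp_in y : 0 <= clamp y <= 1.
Proof. unfold clamp, Rmax, Rmin; repeat destruct Rle_dec; lra. Qed.
Lemma clamp_lip y z : Rabs (clamp y - clamp z) <= Rabs (y - z).
Proof. unfold clamp, Rmax, Rmin; repeat destruct Rle_dec; unfold Rabs; repeat destruct Rcase_abs; lra. Qed.
Lemma clamp_id y : 0 <= y <= 1 -> clamp y = y.
Proof. unfold clamp, Rmax, Rmin; repeat destruct Rle_dec; lra. Qed.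

Section Phi.
Variable psi : R -> R.
Variable d0 : R.
Hypothesis F1 : forall eps, 0 < eps -> exists del, 0 < del /\ forall y, 0 < y <= 1 -> y < del -> Rabs (psi y / y - d0) < eps.
Hypothesis F2 : forall r, 0 <= r <= 1 -> forall eps, 0 < eps -> exists del, 0 < del /\ forall y, 0 <= y <= 1 -> Rabs (y - r) < del -> Rabs (psi y - psi r) < eps.

Definition phi1 (z : R) := if Rle_dec z 0 then d0 else psi z / z.
Definition phi (r : R) := phi1 (clamp r).

Lemma phi1_cont z : 0 <= z <= 1 -> forall eps, 0 < eps -> exists del, 0 < del /\ forall y, 0 <= y <= 1 -> Rabs (y - z) < del -> Rabs (phi1 y - phi1 z) < eps.
Proof.
intros Hz eps He. unfold phi1.
destruct (Rle_dec z 0) as [Hz0|Hz0].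
- destruct (F1 eps He) as [d [Hd H]]. exists d; split; auto. intros y Hy Hyz.
  destruct (Rle_dec y 0). rewrite Rminus_diag, Rabs_R0; auto.
  apply H. lra. assert (z = 0) by lra. subst. rewrite Rminus_0_r in Hyz. unfold Rabs in Hyz; destruct Rcase_abs; lra.
- assert (zp : 0 < z) by lra.
  set (K := Rabs (psi z) + 1).
  assert (HK: 0 < K) by (unfold K; pose proof (Rabs_pos (psi z)); lra).
  destruct (F2 z Hz (eps * z / 8)) as [d [Hd H]]. { apply Rmult_lt_0_compat; [|lra]. apply Rmult_lt_0_compat; lra. }
  exists (Rmin d (Rmin (z/2) (eps * z * z / (4 * K)))). split.
  { apply Rmin_pos; auto. apply Rmin_pos. lra. apply Rdiv_lt_0_compat. apply Rmult_lt_0_compat; [|lra]. apply Rmult_lt_0_compat; lra. lra. }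
  intros y Hy Hyz.
  assert (H1 : Rabs (y - z) < d) by (eapply Rlt_le_trans; [exact Hyz| apply Rmin_l]).
  assert (H2 : Rabs (y - z) < z/2) by (eapply Rlt_le_trans; [exact Hyz| eapply Rle_trans; [apply Rmin_r|apply Rmin_l]]).
  assert (H3 : Rabs (y - z) < eps * z * z / (4 * K)) by (eapply Rlt_le_trans; [exact Hyz| eapply Rle_trans; [apply Rmin_r|apply Rmin_r]]).
  assert (yp : z/2 < y) by (unfold Rabs in H2; destruct Rcase_abs; lra).
  destruct (Rle_dec y 0). lra.
  specialize (H y Hy H1).
  replace (psi y / y - psi z / z) with ((psi y - psi z) / y + psi z * (z - y) / (y * z)) by (field; lra).
  eapply Rle_lt_trans. apply Rabs_triang.
  rewrite !Rabs_div, Rabs_mult, Rabs_mult by (try apply Rmult_integral_contrapositive; lra).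
  rewrite (Rabs_right y), (Rabs_right z) by lra.
  assert (A1 : Rabs (psi y - psi z) / y <= (eps * z / 8) / (z/2)).
  { unfold Rdiv. apply Rmult_le_compat. apply Rabs_pos. left; apply Rinv_0_lt_compat; lra. lra. apply Rinv_le_contravar; lra. }
  assert (A2 : Rabs (psi z) * Rabs (z - y) / (y * z) <= K * (eps * z * z / (4 * K)) / (z / 2 * z)).
  { unfold Rdiv. apply Rmult_le_compat. apply Rmult_le_pos; apply Rabs_pos. left; apply Rinv_0_lt_compat. apply Rmult_lt_0_compat; lra.
    apply Rmult_le_compat; try apply Rabs_pos. unfold K; lra. rewrite Rabs_minus_sym. unfold Rdiv in H3. lra.
    apply Rinv_le_contravar. apply Rmult_lt_0_compat; lra. apply Rmult_le_compat_r; lra. }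
  assert (E1 : (eps * z / 8) / (z/2) = eps / 4) by (field; lra).
  assert (E2 : K * (eps * z * z / (4 * K)) / (z / 2 * z) = eps / 2) by (field; lra).
  lra.
Qed.

Lemma phi_cont r : continuity_pt phi r.
Proof.
apply eps_cont. intros eps He.
destruct (phi1_cont (clamp r) (clamp_in r) eps He) as [d [Hd H]].
exists d; split; auto. intros y Hy. unfold phi. apply H. apply clamp_in.
eapply Rle_lt_trans. apply clamp_lip. auto.
Qed.

Lemma phi_psi r : 0 < r <= 1 -> r * phi r = psi r.
Proof. intros H. unfold phi, phi1. rewrite clamp_id by lra. destruct Rle_dec. lra. field. lra. Qed.

End Phi.

Lemma cp_c f x : continuity_pt f x -> continuous f x.
Proof. intros H. apply continuity_pt_filterlim; auto. Qed.
Lemma c_cp f x : continuous f x -> continuity_pt f x.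
Proof. intros H. apply continuity_pt_filterlim; auto. Qed.

Definition allc (h : R -> R) := forall t, continuity_pt h t.

Lemma exRI h a b : allc h -> ex_RInt h a b.
Proof. intros H. apply (ex_RInt_continuous (V:=R_CompleteNormedModule)). intros; apply cp_c; auto. Qed.

Lemma RInt_deriv h a x : allc h -> is_derive (fun y => RInt h a y) x (h x).
Proof. intros H. apply (is_derive_RInt h (fun y => RInt h a y) a x).
 exists (mkposreal 1 Rlt_0_1). intros y _. apply (RInt_correct (V:=R_CompleteNormedModule)), exRI; auto.
 apply cp_c; auto. Qed.

Lemma RInt_cont h a : allc h -> allc (fun y => RInt h a y).
Proof. intros H x. apply c_cp. apply (ex_derive_continuous (K:=R_AbsRing) (V:=R_NormedModule)). eexists. apply RInt_deriv; auto. Qed.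

Lemma RInt_bound h a b M : allc h -> (forall t, Rmin a b <= t <= Rmax a b -> Rabs (h t) <= M) -> Rabs (RInt h a b) <= Rabs (b - a) * M.
Proof. intros Hc H. destruct (Rle_dec a b).
- rewrite (Rabs_right (b - a)) by lra. apply abs_RInt_le_const; auto. apply exRI; auto.
  intros t Ht; apply H. rewrite Rmin_left, Rmax_right; lra.
- rewrite <- (opp_RInt_swap h) by (apply exRI; auto). unfold opp; simpl. rewrite Rabs_Ropp.
  rewrite (Rabs_left (b-a)) by lra. replace (-(b-a)) with (a - b) by ring. apply abs_RInt_le_const; auto. lra. apply exRI; auto.
  intros t Ht; apply H. rewrite Rmin_right, Rmax_left; lra.
Qed.

Lemma RInt_const' a b c : RInt (fun _ => c) a b = (b - a) * c.
Proof. rewrite RInt_const. reflexivity. Qed.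

Lemma RInt_minus' f g a b : allc f -> allc g -> RInt (fun x => f x - g x) a b = RInt f a b - RInt g a b.
Proof. intros. apply (RInt_minus f g); apply exRI; auto. Qed.

Lemma RInt_plus' f g a b : allc f -> allc g -> RInt (fun x => f x + g x) a b = RInt f a b + RInt g a b.
Proof. intros. apply (RInt_plus f g); apply exRI; auto. Qed.

Lemma RInt_scal' f a b k : allc f -> RInt (fun x => k * f x) a b = k * RInt f a b.
Proof. intros. apply (RInt_scal f); apply exRI; auto. Qed.

Lemma RInt_Chasles' f a b c : allc f -> RInt f a b + RInt f b c = RInt f a c.
Proof. intros. apply (RInt_Chasles f); apply exRI; auto. Qed.

Lemma RInt_le' f g a b : a <= b -> allc f -> allc g -> (forall x, a <= x <= b -> f x <= g x) -> RInt f a b <= RInt g a b.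
Proof. intros. apply RInt_le; auto; try apply exRI; auto. intros; apply H2; lra. Qed.

Lemma allc_const c : allc (fun _ => c).
Proof. intros t. apply continuity_pt_const. intros x y; auto. Qed.
Lemma allc_mult f g : allc f -> allc g -> allc (fun x => f x * g x).
Proof. intros Hf Hg t. apply continuity_pt_mult; auto. Qed.
Lemma allc_plus f g : allc f -> allc g -> allc (fun x => f x + g x).
Proof. intros Hf Hg t. apply continuity_pt_plus; auto. Qed.
Lemma allc_minus f g : allc f -> allc g -> allc (fun x => f x - g x).
Proof. intros Hf Hg t. apply continuity_pt_minus; auto. Qed.

Definition W (h : R -> R) (s : R) := if Req_EM_T s 0 then h 0 else RInt h 0 s / s.

Lemma W_cont h : allc h -> allc (W h).
Proof.
intros Hc s. destruct (Req_dec s 0) as [Hs|Hs].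
- subst. apply eps_cont. intros eps He.
  destruct (cont_eps h 0 (Hc 0) (eps/2)) as [d [Hd H]]; [lra|].
  exists d; split; auto. intros y Hy. unfold W. destruct (Req_EM_T 0 0); [|congruence].
  destruct (Req_EM_T y 0). rewrite Rminus_diag, Rabs_R0; auto.
  replace (RInt h 0 y / y - h 0) with (RInt (fun t => h t - h 0) 0 y / y).
  2:{ rewrite RInt_minus', RInt_const'; auto. field; auto. apply allc_const. }
  rewrite Rabs_div by auto.
  apply (Rle_lt_trans _ (eps/2)); [|lra].
  apply (Rmult_le_reg_r (Rabs y)). apply Rabs_pos_lt; auto.
  unfold Rdiv. rewrite Rmult_assoc, Rinv_l, Rmult_1_r by (apply Rabs_no_R0; auto).
  rewrite Rmult_comm. replace (Rabs y) with (Rabs (y - 0)) by (f_equal; ring).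
  apply RInt_bound. apply allc_minus; auto. apply allc_const.
  intros t Ht. left; apply H. rewrite Rminus_0_r in Hy.
  unfold Rmin, Rmax in Ht; destruct Rle_dec; unfold Rabs in *; repeat destruct Rcase_abs; lra.
- assert (Hg : continuity_pt (fun y => RInt h 0 y / y) s).
  { apply continuity_pt_div; auto. apply RInt_cont; auto. apply continuity_pt_id. }
  apply eps_cont. intros eps He. destruct (cont_eps _ _ Hg eps He) as [d [Hd H]].
  exists (Rmin d (Rabs s)). split. apply Rmin_pos; auto. apply Rabs_pos_lt; auto.
  intros y Hy. unfold W. destruct (Req_EM_T s 0); [congruence|].
  destruct (Req_EM_T y 0).
  + subst. exfalso. assert (Rabs (0 - s) < Rabs s) by (eapply Rlt_le_trans; [exact Hy|apply Rmin_r]).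
    rewrite Rminus_0_l, Rabs_Ropp in H0. lra.
  + apply H. eapply Rlt_le_trans; [exact Hy|apply Rmin_l].
Qed.

Lemma W_eq h s : s <> 0 -> W h s * s = RInt h 0 s.
Proof. intros H. unfold W. destruct Req_EM_T; [congruence|]. field; auto. Qed.

Lemma W_bound h s M : allc h -> 0 <= s -> (forall t, 0 <= t <= s -> 0 <= h t <= M) -> 0 <= W h s <= M.
Proof.
intros Hc Hs H. unfold W. destruct Req_EM_T as [e|n].
- subst. apply H; lra.
- assert (sp : 0 < s) by lra.
  assert (0 <= RInt h 0 s <= s * M).
  { split. apply RInt_ge_0. lra. apply exRI; auto. intros; apply H; lra.
    eapply Rle_trans. apply Rle_abs. replace (s * M) with ((s - 0) * M) by ring.
    apply abs_RInt_le_const. lra. apply exRI; auto. intros t Ht. specialize (H t Ht). rewrite Rabs_right; lra. }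
  split. apply Rdiv_le_0_compat; lra.
  apply (Rmult_le_reg_r s); auto. unfold Rdiv. rewrite Rmult_assoc, Rinv_l, Rmult_1_r by lra. lra.
Qed.

Lemma allc_pow L n : allc (fun s => (L*s)^n).
Proof. intros t. apply c_cp. apply (ex_derive_continuous (K:=R_AbsRing) (V:=R_NormedModule)). auto_derive. auto. Qed.

Lemma RInt_pow L n x : RInt (fun s => L * (L*s)^n / INR (Factorial.fact n)) 0 x = (L*x)^(S n) / INR (Factorial.fact (S n)).
Proof.
apply (is_RInt_unique (V:=R_CompleteNormedModule)).
replace ((L*x)^(S n) / INR (Factorial.fact (S n))) with ((L*x)^(S n) / INR (Factorial.fact (S n)) - (L*0)^(S n) / INR (Factorial.fact (S n))).
2:{ simpl. rewrite Rmult_0_r, Rmult_0_l. unfold Rdiv. ring. }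
apply (is_RInt_derive (V:=R_CompleteNormedModule) (fun s => (L*s)^(S n) / INR (Factorial.fact (S n)))).
- intros t _. assert (Hd : is_derive (fun s => (L*s)^(S n) / INR (Factorial.fact (S n))) t (L * (L*t)^n / INR (Factorial.fact n))).
  { auto_derive. auto. change (match n with 0%nat => 1 | S _ => INR n + 1 end) with (INR (S n)). rewrite S_INR, plus_INR, mult_INR. field.
    pose proof (INR_fact_lt_0 n). pose proof (pos_INR n). try split; nra. }
  exact Hd.
- intros t _. apply cp_c. apply continuity_pt_div. apply continuity_pt_mult. apply continuity_pt_const; intros ??; auto.
  apply allc_pow.
  apply continuity_pt_const; intros ??; auto. apply INR_fact_neq_0.
Qed.

Section Seq.
Variable ph : R -> R.
Variable L : R.
Hypothesis ph_c : allc ph.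
Hypothesis ph_b : forall r, 0 <= ph r <= L.

Fixpoint a (n : nat) : R -> R := match n with O => fun _ => 1 | S m => fun x => RInt (W (fun r => ph r * a m r)) 0 x end.
Definition w n := W (fun r => ph r * a n r).
Definition v n x := RInt (fun r => ph r * a n r) 0 x.

Lemma a_cont n : allc (a n).
Proof. induction n. apply allc_const. simpl. apply RInt_cont. apply W_cont. apply allc_mult; auto. Qed.
Lemma w_cont n : allc (w n).
Proof. apply W_cont, allc_mult; auto. apply a_cont. Qed.
Lemma pa_cont n : allc (fun r => ph r * a n r).
Proof. apply allc_mult; auto. apply a_cont. Qed.

Lemma a_deriv n x : is_derive (a (S n)) x (w n x).
Proof. apply (RInt_deriv (w n)). apply w_cont. Qed.
Lemma v_deriv n x : is_derive (v n) x (ph x * a n x).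
Proof. apply (RInt_deriv (fun r => ph r * a n r)). apply pa_cont. Qed.
Lemma a_S0 n : a (S n) 0 = 0.
Proof. simpl. apply (RInt_point (V:=R_CompleteNormedModule)). Qed.
Lemma v_0 n : v n 0 = 0.
Proof. apply (RInt_point (V:=R_CompleteNormedModule)). Qed.
Lemma v_w n x : x <> 0 -> w n x * x = v n x.
Proof. intros. apply W_eq; auto. Qed.

Lemma L_ge0 : 0 <= L.
Proof. destruct (ph_b 0); lra. Qed.

Definition bnd n x := (L * x)^n / INR (Factorial.fact n).
Lemma bnd_ge0 n x : 0 <= x -> 0 <= bnd n x.
Proof. intros. unfold bnd. apply Rdiv_le_0_compat. apply pow_le. apply Rmult_le_pos; auto. apply L_ge0. apply INR_fact_lt_0. Qed.
Lemma bnd_incr n x y : 0 <= x <= y -> bnd n x <= bnd n y.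
Proof. intros. unfold bnd. unfold Rdiv. apply Rmult_le_compat_r. left; apply Rinv_0_lt_compat, INR_fact_lt_0.
 apply pow_incr. pose proof L_ge0. split. apply Rmult_le_pos; lra. apply Rmult_le_compat_l; lra. Qed.

Lemma a_props n : (forall x, 0 <= x -> 0 <= a n x <= bnd n x) /\ (forall x y, 0 <= x <= y -> a n x <= a n y).
Proof.
induction n.
- split. intros; unfold bnd; simpl; lra. intros; simpl; lra.
- destruct IHn as [IH1 IH2].
  assert (Hw : forall s, 0 <= s -> 0 <= w n s <= L * bnd n s).
  { intros s Hs. apply W_bound; auto. apply pa_cont. intros t Ht. destruct (IH1 t) as [h1 h2]. lra.
    destruct (ph_b t). split. apply Rmult_le_pos; auto.
    apply Rmult_le_compat; auto. eapply Rle_trans. exact h2. apply bnd_incr; lra. }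
  split.
  + intros x Hx. simpl. split.
    apply RInt_ge_0; auto. apply exRI, w_cont. intros; apply Hw; lra.
    unfold bnd at 1. rewrite <- RInt_pow.
    apply RInt_le'; auto. apply w_cont. intros t. unfold Rdiv. apply continuity_pt_mult. apply continuity_pt_mult.
    apply continuity_pt_const; intros ??; auto. apply allc_pow.
    apply continuity_pt_const; intros ??; auto.
    intros t Ht. destruct (Hw t) as [_ h]. lra. unfold bnd in h. unfold Rdiv in *. rewrite <- Rmult_assoc in h. exact h.
  + intros x y Hxy. change (RInt (w n) 0 x <= RInt (w n) 0 y). rewrite <- (RInt_Chasles' (w n) 0 x y) by apply w_cont.
    assert (0 <= RInt (w n) x y). { apply RInt_ge_0. lra. apply exRI, w_cont. intros; apply Hw; lra. }
    lra.
Qed.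

Lemma a_ge0 n x : 0 <= x -> 0 <= a n x.
Proof. intros. apply (a_props n). auto. Qed.
Lemma a_le n x : 0 <= x -> a n x <= bnd n x.
Proof. intros. apply (a_props n). auto. Qed.
Lemma a_mono n x y : 0 <= x <= y -> a n x <= a n y.
Proof. intros. apply (a_props n). auto. Qed.
Lemma w_b n s : 0 <= s -> 0 <= w n s <= L * bnd n s.
Proof. intros Hs. apply W_bound; auto. apply pa_cont. intros t Ht.
  destruct (ph_b t). split. apply Rmult_le_pos; auto. apply a_ge0; lra.
  apply Rmult_le_compat; auto. apply a_ge0; lra. eapply Rle_trans. apply a_le; lra. apply bnd_incr; lra. Qed.

Lemma v_b n x : 0 <= x -> 0 <= v n x <= x * L * a n x.
Proof. intros Hx. unfold v. split.
 apply RInt_ge_0; auto. apply exRI, pa_cont. intros t Ht. apply Rmult_le_pos. apply ph_b. apply a_ge0; lra.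
 eapply Rle_trans. apply Rle_abs. replace (x * L * a n x) with ((x - 0) * (L * a n x)) by ring.
 apply abs_RInt_le_const; auto. apply exRI, pa_cont. intros t Ht.
 destruct (ph_b t). rewrite Rabs_right. apply Rmult_le_compat; auto. apply a_ge0; lra. apply a_mono; lra.
 apply Rle_ge, Rmult_le_pos; auto. apply a_ge0; lra. Qed.

Lemma v_1 n : v n 1 <= a n 1 * v 0 1.
Proof. unfold v. simpl. rewrite <- RInt_scal'. apply RInt_le'. lra. apply pa_cont.
 apply allc_mult. apply allc_const. apply allc_mult; auto. apply allc_const.
 intros t Ht. rewrite Rmult_1_r. rewrite Rmult_comm. apply Rmult_le_compat_r. apply ph_b. apply a_mono; lra.
 apply allc_mult; auto. apply allc_const. Qed.

End Seq.

Lemma RInt_bound' h a b M : ex_RInt h a b -> (forall t, Rmin a b <= t <= Rmax a b -> Rabs (h t) <= M) -> Rabs (RInt h a b) <= Rabs (b - a) * M.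
Proof. intros Hc H. destruct (Rle_dec a b).
- rewrite (Rabs_right (b - a)) by lra. apply abs_RInt_le_const; auto.
  intros t Ht; apply H. rewrite Rmin_left, Rmax_right; lra.
- rewrite <- (opp_RInt_swap h) by (try exact Hc; try (apply ex_RInt_swap; exact Hc)). unfold opp; simpl. rewrite Rabs_Ropp.
  rewrite (Rabs_left (b-a)) by lra. replace (-(b-a)) with (a - b) by ring. apply abs_RInt_le_const; auto. lra.
  apply ex_RInt_swap; auto.
  intros t Ht; apply H. rewrite Rmin_right, Rmax_left; lra.
Qed.

Lemma allc_sum (g : nat -> R -> R) N : (forall n, allc (g n)) -> allc (fun x => sum_f_R0 (fun n => g n x) N).
Proof. intros H. induction N; simpl. apply H. apply allc_plus; auto. Qed.

Lemma RInt_sum (g : nat -> R -> R) N y z : (forall n, allc (g n)) ->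
  RInt (fun x => sum_f_R0 (fun n => g n x) N) y z = sum_f_R0 (fun n => RInt (g n) y z) N.
Proof. intros H. induction N; simpl. reflexivity. rewrite RInt_plus'; auto. rewrite IHN; auto. apply allc_sum; auto. Qed.

Lemma tail_eq (a : nat -> R) N : ex_series a -> Series a - sum_f_R0 a N = Series (fun k => a (S N + k)%nat).
Proof. intros H. rewrite (Series_incr_n a (S N)) by (auto; lia). simpl pred. ring. Qed.

Lemma Series_ge0 (a : nat -> R) : (forall n, 0 <= a n) -> ex_series a -> 0 <= Series a.
Proof. intros H He. assert (Series (fun _ => 0) = 0).
 { apply is_series_unique. apply is_series_Reals. intros e He'. exists 0%nat. intros n _. unfold R_dist.
   replace (sum_f_R0 (fun _ => 0) n) with 0. rewrite Rminus_0_r, Rabs_R0; auto. induction n; simpl; auto; lra. }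
 rewrite <- H0. apply Series_le; auto. intros; split; auto; lra. Qed.

Section GL.
Variables (f g : nat -> R -> R) (M : nat -> R) (lo hi : R).
Hypothesis Hlh : lo < hi.
Hypothesis HM : ex_series M.
Hypothesis Hg_b : forall n x, lo <= x <= hi -> Rabs (g n x) <= M n.
Hypothesis Hg_c : forall n, allc (g n).
Hypothesis Hf : forall n x y, lo <= x <= hi -> lo <= y <= hi -> f n y - f n x = RInt (g n) x y.
Hypothesis Hf0 : exists c, lo <= c <= hi /\ ex_series (fun n => f n c).

Definition GG x := Series (fun n => g n x).
Definition FF x := Series (fun n => f n x).

Lemma M_ge0 n : 0 <= M n.
Proof. pose proof (Hg_b n lo). pose proof (Rabs_pos (g n lo)). assert (lo <= lo <= hi) by lra. specialize (H H1). lra. Qed.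

Lemma g_ex x : lo <= x <= hi -> ex_series (fun n => g n x).
Proof. intros Hx. apply (ex_series_le (K:=R_AbsRing) (V:=R_CompleteNormedModule) _ M). intros n. apply Hg_b; auto. auto. Qed.

Lemma g_ex_abs x : lo <= x <= hi -> ex_series (fun n => Rabs (g n x)).
Proof. intros Hx. apply (ex_series_le (K:=R_AbsRing) (V:=R_CompleteNormedModule) _ M); [intros n|auto].
 change (Rabs (Rabs (g n x)) <= M n). rewrite Rabs_Rabsolu. apply Hg_b; auto. Qed.

Lemma tail_bound x N : lo <= x <= hi -> Rabs (GG x - sum_f_R0 (fun n => g n x) N) <= Series M - sum_f_R0 M N.
Proof. intros Hx. unfold GG. rewrite !tail_eq; auto. 2: apply g_ex; auto.
 assert (E1 : ex_series (fun k => Rabs (g (S N + k)%nat x))).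
 { apply (ex_series_incr_n (fun n => Rabs (g n x)) (S N)). apply g_ex_abs; auto. }
 eapply Rle_trans. apply (Series_Rabs _ E1).
 apply Series_le. intros n. split. apply Rabs_pos. apply Hg_b; auto.
 apply (ex_series_incr_n M (S N)); auto. Qed.

Lemma T_small eps : 0 < eps -> exists N, forall n, (N <= n)%nat -> Series M - sum_f_R0 M n < eps.
Proof. intros He. pose proof (Series_correct _ HM) as H. apply is_series_Reals in H.
 destruct (H eps He) as [N HN]. exists N. intros n Hn. specialize (HN n Hn). unfold R_dist in HN.
 unfold Rabs in HN; destruct Rcase_abs; lra. Qed.

Lemma GG_cont x : lo < x < hi -> continuity_pt GG x.
Proof. intros Hx. apply eps_cont. intros eps He.
 destruct (T_small (eps/3)) as [N HN]. lra. specialize (HN N (le_n N)).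
 destruct (cont_eps _ x (allc_sum g N Hg_c x) (eps/3)) as [d [Hd H]]. lra.
 exists (Rmin d (Rmin (x - lo) (hi - x))). split. apply Rmin_pos; auto. apply Rmin_pos; lra.
 intros y Hy.
 assert (Hy1 : Rabs (y - x) < d) by (eapply Rlt_le_trans; [exact Hy|apply Rmin_l]).
 assert (Hy2 : Rabs (y - x) < Rmin (x - lo) (hi - x)) by (eapply Rlt_le_trans; [exact Hy|apply Rmin_r]).
 assert (Hy3 : lo <= y <= hi). { unfold Rmin in Hy2; destruct Rle_dec; unfold Rabs in Hy2; destruct Rcase_abs; lra. }
 specialize (H y Hy1). pose proof (tail_bound y N Hy3). pose proof (tail_bound x N ltac:(lra)).
 set (Sy := sum_f_R0 (fun n => g n y) N) in *. set (Sx := sum_f_R0 (fun n => g n x) N) in *.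
 replace (GG y - GG x) with ((GG y - Sy) + (Sy - Sx) - (GG x - Sx)) by ring.
 assert (Rabs (GG y - Sy + (Sy - Sx) - (GG x - Sx)) <= Rabs (GG y - Sy) + Rabs (Sy - Sx) + Rabs (GG x - Sx)).
 { unfold Rabs; repeat destruct Rcase_abs; lra. }
 lra.
Qed.

Lemma GG_exRI y z : lo < y < hi -> lo < z < hi -> ex_RInt GG y z.
Proof. intros Hy Hz. apply (ex_RInt_continuous (V:=R_CompleteNormedModule)). intros t Ht. apply cp_c. apply GG_cont.
 unfold Rmin, Rmax in Ht; destruct Rle_dec; lra. Qed.

Lemma RInt_series y z : lo < y < hi -> lo < z < hi -> is_series (fun n => RInt (g n) y z) (RInt GG y z).
Proof. intros Hy Hz. apply is_series_Reals. intros eps He.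
 destruct (T_small (eps / (Rabs (z - y) + 1))) as [N HN].
 { apply Rdiv_lt_0_compat; auto. pose proof (Rabs_pos (z-y)); lra. }
 exists N. intros n Hn. unfold R_dist. rewrite <- RInt_sum by auto.
 rewrite <- (RInt_minus (V:=R_CompleteNormedModule)). 2: apply exRI, allc_sum; auto. 2: apply GG_exRI; auto.
 eapply Rle_lt_trans. apply RInt_bound' with (M := Series M - sum_f_R0 M n).
 apply (ex_RInt_minus (V:=R_CompleteNormedModule)). apply exRI, allc_sum; auto. apply GG_exRI; auto.
 intros t Ht. change (Rabs (sum_f_R0 (fun n0 => g n0 t) n - GG t) <= Series M - sum_f_R0 M n).
 rewrite Rabs_minus_sym. apply tail_bound. unfold Rmin, Rmax in Ht; destruct Rle_dec; lra.
 specialize (HN n Hn). pose proof (Rabs_pos (z - y)).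
 assert (0 <= Series M - sum_f_R0 M n). { eapply Rle_trans. apply Rabs_pos. apply (tail_bound lo n). lra. }
 apply Rle_lt_trans with ((Rabs (z - y) + 1) * (Series M - sum_f_R0 M n)). nra.
 apply (Rmult_lt_compat_l (Rabs (z - y) + 1)) in HN; [|lra].
 replace ((Rabs (z - y) + 1) * (eps / (Rabs (z - y) + 1))) with eps in HN by (field; lra). lra.
Qed.

Lemma f_ex x : lo <= x <= hi -> ex_series (fun n => f n x).
Proof. intros Hx. destruct Hf0 as [c [Hc Hs]].
 apply (ex_series_ext (fun n => plus (f n c) (RInt (g n) c x))).
 { intros n. rewrite <- Hf; auto. unfold plus; simpl. ring. }
 apply (ex_series_plus (K:=R_AbsRing) (V:=R_NormedModule)); auto.
 apply (ex_series_le (K:=R_AbsRing) (V:=R_CompleteNormedModule) _ (fun n => Rabs (x - c) * M n)).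
 intros n. change (Rabs (RInt (g n) c x) <= Rabs (x - c) * M n). apply RInt_bound; auto.
 intros t Ht. apply Hg_b. unfold Rmin, Rmax in Ht; destruct Rle_dec; lra.
 apply (ex_series_scal_l (K:=R_AbsRing) (V:=R_NormedModule)); auto.
Qed.

Lemma FF_diff y z : lo < y < hi -> lo < z < hi -> FF z - FF y = RInt GG y z.
Proof. intros Hy Hz. unfold FF. rewrite <- Series_minus by (apply f_ex; lra).
 rewrite (Series_ext _ (fun n => RInt (g n) y z)). apply is_series_unique, RInt_series; auto.
 intros n. apply Hf; lra. Qed.

Lemma FF_deriv x : lo < x < hi -> is_derive FF x (GG x).
Proof. intros Hx.
 set (d := Rmin (x - lo) (hi - x)). assert (Hd : 0 < d) by (apply Rmin_pos; lra).
 assert (Hin : forall y, Rabs (y - x) < d -> lo < y < hi).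
 { intros y Hy. unfold d, Rmin in Hy; destruct Rle_dec; unfold Rabs in Hy; destruct Rcase_abs; lra. }
 apply (is_derive_ext_loc (fun y => FF x + RInt GG x y)).
 { exists (mkposreal d Hd). intros y Hy. change (Rabs (y - x) < d) in Hy. change (@eq R (FF x + RInt GG x y) (FF y)). rewrite <- FF_diff; auto. ring. }
 apply is_derive_Reals. replace (GG x) with (0 + GG x) by ring.
 apply derivable_pt_lim_plus. apply derivable_pt_lim_const. apply is_derive_Reals.
 apply (is_derive_RInt GG (fun y => RInt GG x y) x x).
 { exists (mkposreal d Hd). intros y Hy. change (Rabs (y - x) < d) in Hy.
   apply (RInt_correct (V:=R_CompleteNormedModule)). apply GG_exRI; auto. }
 apply cp_c, GG_cont; auto.
Qed.

Lemma FF_cont x : lo < x < hi -> continuity_pt FF x.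
Proof. intros. apply c_cp. apply (ex_derive_continuous (K:=R_AbsRing) (V:=R_NormedModule)). eexists. apply FF_deriv; auto. Qed.

End GL.

Lemma PS_eq c x : PSeries c x = Series (fun n => x^n * c n).
Proof. unfold PSeries. apply Series_ext. intros; rewrite Rmult_comm; reflexivity. Qed.

Lemma exp_ser y : ex_series (fun n => y^n / INR (Factorial.fact n)).
Proof. pose proof (is_exp_Reals y) as H. eapply ex_series_ext; [|eexists; exact H].
 intros n. simpl. reflexivity. Qed.

Lemma sum_ge_last (b : nat -> R) n : (forall k, 0 <= b k) -> b n <= sum_f_R0 b n.
Proof. intros H. destruct n. simpl; lra. simpl. pose proof (cond_pos_sum b n H). lra. Qed.

Lemma term_le_Series (b : nat -> R) n : (forall k, 0 <= b k) -> ex_series b -> b n <= Series b.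
Proof. intros H He. rewrite (Series_incr_n b (S n)) by (auto; lia). simpl pred.
 pose proof (sum_ge_last b n H). assert (0 <= Series (fun k => b (S n + k)%nat)).
 apply Series_ge0. intros; auto. apply (ex_series_incr_n b (S n)); auto. lra. Qed.

Lemma pow_fact_exp y n : 0 <= y -> y^n / INR (Factorial.fact n) <= exp y.
Proof. intros Hy. rewrite exp_Reals, PS_eq.
 replace (y^n / INR (Factorial.fact n)) with (y^n * / INR (Factorial.fact n)) by reflexivity.
 apply (term_le_Series (fun k => y^k * / INR (Factorial.fact k))).
 intros k. apply Rmult_le_pos. apply pow_le; auto. left; apply Rinv_0_lt_compat, INR_fact_lt_0.
 apply exp_ser. Qed.

Lemma radius_inf (c : nat -> R) K L : 0 <= L -> (forall n, Rabs (c n) <= K * ((L^n) / INR (Factorial.fact n))) -> forall x, Rbar_lt (Rabs x) (CV_radius c).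
Proof. intros HL H x. set (r := Rabs x + 1).
 assert (Hr : Rbar_le r (CV_radius c)).
 { destruct (CV_radius_bounded c) as [Hub _]. apply Hub. exists (K * exp (L * r)). intros n.
   rewrite Rabs_mult. pose proof (H 0%nat) as H0. specialize (H n). assert (0 <= r) by (unfold r; pose proof (Rabs_pos x); lra).
   rewrite (Rabs_right (r^n)) by (apply Rle_ge, pow_le; auto).
   assert (0 <= K). { simpl in H0. pose proof (Rabs_pos (c 0%nat)).
     replace (1 / 1) with 1 in H0 by field. lra. }
   apply Rle_trans with (K * (L^n / INR (Factorial.fact n)) * r^n). apply Rmult_le_compat_r; auto. apply pow_le; auto.
   replace (K * (L^n / INR (Factorial.fact n)) * r^n) with (K * ((L*r)^n / INR (Factorial.fact n))) by (rewrite Rpow_mult_distr; unfold Rdiv; ring).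
   apply Rmult_le_compat_l; auto. apply pow_fact_exp. apply Rmult_le_pos; auto. }
 destruct (CV_radius c); simpl in *; auto. unfold r in Hr. lra.
Qed.

Section CV.
Variable ph : R -> R.
Variable L : R.
Hypothesis ph_c : allc ph.
Hypothesis ph_b : forall r, 0 <= ph r <= L.
Variable lam : R.
Hypothesis lam_ge : 0 <= lam.

Definition Cf x := PSeries (fun n => a ph n x) lam.
Definition Vf x := PSeries (fun n => v ph n x) lam.

Let fC m x := lam^(S m) * a ph (S m) x.
Let gC m x := lam^(S m) * w ph m x.
Let MC m := lam * L * ((2*lam*L)^m / INR (Factorial.fact m)).
Let fV m x := lam^m * v ph m x.
Let gV m x := lam^m * (ph x * a ph m x).
Let MV m := L * ((2*lam*L)^m / INR (Factorial.fact m)).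

Lemma Lg : 0 <= L.
Proof. apply (L_ge0 ph L ph_b). Qed.

Lemma hC1 : ex_series MC.
Proof. apply (ex_series_scal_l (K:=R_AbsRing) (V:=R_NormedModule) (lam * L)). apply exp_ser. Qed.
Lemma hV1 : ex_series MV.
Proof. apply (ex_series_scal_l (K:=R_AbsRing) (V:=R_NormedModule) L). apply exp_ser. Qed.

Lemma bnd2 n x : 0 <= x <= 2 -> lam^n * bnd L n x <= (2*lam*L)^n / INR (Factorial.fact n).
Proof. intros Hx. unfold bnd. pose proof Lg.
 replace ((2*lam*L)^n / INR (Factorial.fact n)) with (lam^n * ((L*2)^n / INR (Factorial.fact n))).
 2:{ replace (2*lam*L) with (lam * (L*2)) by ring. rewrite (Rpow_mult_distr lam (L*2)). unfold Rdiv. rewrite Rmult_assoc. reflexivity. }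
 apply Rmult_le_compat_l. apply pow_le; auto. apply (bnd_incr ph L ph_b n x 2). lra. Qed.

Lemma hC2 n x : 0 <= x <= 2 -> Rabs (gC n x) <= MC n.
Proof. intros Hx. unfold gC, MC. destruct (w_b ph L ph_c ph_b n x) as [h1 h2]. lra.
 rewrite Rabs_right. 2: apply Rle_ge, Rmult_le_pos; auto; apply pow_le; auto.
 simpl. rewrite Rmult_assoc. rewrite (Rmult_assoc lam L). apply Rmult_le_compat_l; auto.
 apply Rle_trans with (lam^n * (L * bnd L n x)). apply Rmult_le_compat_l; auto. apply pow_le; auto.
 pose proof (bnd2 n x Hx). pose proof Lg. replace (lam ^ n * (L * bnd L n x)) with (L * (lam^n * bnd L n x)) by ring.
 apply Rmult_le_compat_l; auto. Qed.

Lemma hV2 n x : 0 <= x <= 2 -> Rabs (gV n x) <= MV n.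
Proof. intros Hx. unfold gV, MV. pose proof (a_ge0 ph L ph_c ph_b n x ltac:(lra)). pose proof (a_le ph L ph_c ph_b n x ltac:(lra)).
 destruct (ph_b x). pose proof Lg.
 rewrite Rabs_right. 2: apply Rle_ge, Rmult_le_pos; [apply pow_le; auto| apply Rmult_le_pos; auto].
 apply Rle_trans with (L * (lam^n * bnd L n x)). 
 replace (L * (lam^n * bnd L n x)) with (lam^n * (L * bnd L n x)) by ring.
 apply Rmult_le_compat_l. apply pow_le; auto. apply Rmult_le_compat; auto.
 apply Rmult_le_compat_l; auto. apply bnd2; auto. Qed.

Lemma hC3 n : allc (gC n).
Proof. unfold gC. apply allc_mult. apply allc_const. apply w_cont; auto. Qed.
Lemma hV3 n : allc (gV n).
Proof. unfold gV. apply allc_mult. apply allc_const. apply pa_cont; auto. Qed.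

Lemma hC4 n x y : 0 <= x <= 2 -> 0 <= y <= 2 -> fC n y - fC n x = RInt (gC n) x y.
Proof. intros. unfold fC, gC. rewrite RInt_scal' by (apply w_cont; auto). simpl a.
 change (lam ^ S n * RInt (w ph n) 0 y - lam ^ S n * RInt (w ph n) 0 x = lam ^ S n * RInt (w ph n) x y).
 rewrite <- (RInt_Chasles' (w ph n) 0 x y) by (apply w_cont; auto). ring. Qed.
Lemma hV4 n x y : 0 <= x <= 2 -> 0 <= y <= 2 -> fV n y - fV n x = RInt (gV n) x y.
Proof. intros. unfold fV, gV, v. rewrite RInt_scal' by (apply pa_cont; auto).
 rewrite <- (RInt_Chasles' (fun r => ph r * a ph n r) 0 x y) by (apply pa_cont; auto). ring. Qed.

Lemma zero_ser : ex_series (fun _ : nat => 0).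
Proof. exists 0. apply is_series_Reals. intros e He. exists 0%nat. intros n _. unfold R_dist.
 replace (sum_f_R0 (fun _ => 0) n) with 0. rewrite Rminus_0_r, Rabs_R0; auto. induction n; simpl; auto; lra. Qed.

Lemma hC5 : exists c, 0 <= c <= 2 /\ ex_series (fun n => fC n c).
Proof. exists 0. split. lra. eapply ex_series_ext; [|apply zero_ser]. intros n. unfold fC. rewrite a_S0, Rmult_0_r. reflexivity. Qed.
Lemma hV5 : exists c, 0 <= c <= 2 /\ ex_series (fun n => fV n c).
Proof. exists 0. split. lra. eapply ex_series_ext; [|apply zero_ser]. intros n. unfold fV. rewrite v_0, Rmult_0_r. reflexivity. Qed.

Lemma Cf_ex x : 0 <= x <= 2 -> ex_series (fun n => lam^n * a ph n x).
Proof. intros Hx. apply ex_series_incr_1. apply (f_ex fC gC MC 0 2 hC1 hC2 hC3 hC4 hC5); lra. Qed.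
Lemma Vf_ex x : 0 <= x <= 2 -> ex_series (fun n => lam^n * v ph n x).
Proof. intros Hx. apply (f_ex fV gV MV 0 2 hV1 hV2 hV3 hV4 hV5); lra. Qed.

Lemma Cf_split x : 0 <= x <= 2 -> Cf x = 1 + FF fC x.
Proof. intros Hx. unfold Cf. rewrite PS_eq. rewrite Series_incr_1 by (apply Cf_ex; auto). unfold FF, fC. replace (lam^0 * a ph 0 x) with 1 by (simpl; ring). reflexivity. Qed.

Lemma Cf_deriv x : 0 < x < 2 -> is_derive Cf x (lam * Series (fun n => lam^n * w ph n x)).
Proof. intros Hx. apply (is_derive_ext_loc (fun y => 1 + FF fC y)).
 { exists (mkposreal (Rmin x (2 - x)) ltac:(apply Rmin_pos; lra)). intros y Hy. change (Rabs (y - x) < Rmin x (2 - x)) in Hy.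
   change (@eq R (1 + FF fC y) (Cf y)). rewrite Cf_split; auto. unfold Rmin in Hy; destruct Rle_dec; unfold Rabs in Hy; destruct Rcase_abs; lra. }
 replace (lam * Series (fun n => lam^n * w ph n x)) with (GG gC x).
 2:{ unfold GG, gC. rewrite <- Series_scal_l. apply Series_ext. intros; simpl; ring. }
 apply is_derive_Reals. replace (GG gC x) with (0 + GG gC x) by ring. apply derivable_pt_lim_plus. apply derivable_pt_lim_const.
 apply is_derive_Reals. apply (FF_deriv fC gC MC 0 2 ltac:(lra) hC1 hC2 hC3 hC4 hC5); lra.
Qed.

Lemma Vf_deriv x : 0 < x < 2 -> is_derive Vf x (ph x * Cf x).
Proof. intros Hx. apply (is_derive_ext_loc (FF fV)).
 { exists (mkposreal 1 Rlt_0_1). intros y _. unfold FF, Vf, fV. rewrite PS_eq. reflexivity. }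
 replace (ph x * Cf x) with (GG gV x).
 2:{ unfold GG, gV, Cf. rewrite PS_eq, <- Series_scal_l. apply Series_ext. intros; simpl; ring. }
 apply (FF_deriv fV gV MV 0 2 ltac:(lra) hV1 hV2 hV3 hV4 hV5); lra.
Qed.

Lemma Ser_w_v x : 0 < x <= 2 -> Series (fun n => lam^n * w ph n x) * x = Vf x.
Proof. intros Hx. unfold Vf. rewrite PS_eq. rewrite Rmult_comm, <- Series_scal_l. apply Series_ext. intros n.
 rewrite <- v_w by lra. ring. Qed.

Lemma Cf_ge1 x : 0 <= x <= 2 -> 1 <= Cf x.
Proof. intros Hx. rewrite Cf_split; auto. assert (0 <= FF fC x). 2: lra.
 apply Series_ge0. intros n. unfold fC. apply Rmult_le_pos. apply pow_le; auto. apply (a_ge0 ph L ph_c ph_b); auto; lra.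
 apply (f_ex fC gC MC 0 2 hC1 hC2 hC3 hC4 hC5); lra. Qed.

Lemma Cf_mono x y : 0 <= x <= y -> y <= 2 -> Cf x <= Cf y.
Proof. intros Hxy Hy. unfold Cf. rewrite !PS_eq. assert (0 <= Series (fun n => lam^n * a ph n y) - Series (fun n => lam^n * a ph n x)). 2: lra.
 rewrite <- Series_minus by (apply Cf_ex; lra). apply Series_ge0.
 intros n. rewrite <- Rmult_minus_distr_l. apply Rmult_le_pos. apply pow_le; auto. pose proof (a_mono ph L ph_c ph_b n x y Hxy). lra.
 apply (ex_series_ext (fun n => plus (lam^n * a ph n y) (opp (lam^n * a ph n x)))). intros; unfold plus, opp; simpl; ring.
 apply (ex_series_plus (K:=R_AbsRing) (V:=R_NormedModule)). apply Cf_ex; lra.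
 apply (ex_series_opp (K:=R_AbsRing) (V:=R_NormedModule)). apply Cf_ex; lra. Qed.

Lemma Vf_ge0 x : 0 <= x <= 2 -> 0 <= Vf x.
Proof. intros Hx. unfold Vf. rewrite PS_eq. apply Series_ge0. intros n. apply Rmult_le_pos. apply pow_le; auto. apply (v_b ph L ph_c ph_b); auto; lra.
 apply Vf_ex; auto. Qed.

Lemma Vf_small x : 0 <= x <= 1 -> Vf x <= x * L * Cf 1.
Proof. intros Hx. unfold Vf, Cf. rewrite !PS_eq. rewrite <- Series_scal_l. apply Series_le.
 intros n. split. apply Rmult_le_pos. apply pow_le; auto. apply (v_b ph L ph_c ph_b); auto; lra.
 destruct (v_b ph L ph_c ph_b n x) as [_ h]. lra. pose proof (a_mono ph L ph_c ph_b n x 1 ltac:(lra)).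
 pose proof Lg. replace (x * L * (lam ^ n * a ph n 1)) with (lam^n * (x * L * a ph n 1)) by ring.
 apply Rmult_le_compat_l. apply pow_le; auto. eapply Rle_trans. exact h. apply Rmult_le_compat_l. apply Rmult_le_pos; lra. auto.
 apply (ex_series_scal_l (K:=R_AbsRing) (V:=R_NormedModule) (x * L)). apply Cf_ex; lra. Qed.

Lemma Vf_1_le : Vf 1 <= v ph 0 1 * Cf 1.
Proof. unfold Vf, Cf. rewrite !PS_eq. rewrite <- Series_scal_l. apply Series_le.
 intros n. split. apply Rmult_le_pos. apply pow_le; auto. apply (v_b ph L ph_c ph_b); auto; lra.
 pose proof (v_1 ph L ph_c ph_b n). replace (v ph 0 1 * (lam ^ n * a ph n 1)) with (lam^n * (a ph n 1 * v ph 0 1)) by ring.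
 apply Rmult_le_compat_l. apply pow_le; auto. auto.
 apply (ex_series_scal_l (K:=R_AbsRing) (V:=R_NormedModule)). apply Cf_ex; lra. Qed.

Lemma Vf_1_ge : v ph 0 1 <= Vf 1.
Proof. unfold Vf. rewrite PS_eq. rewrite Series_incr_1 by (apply Vf_ex; lra). simpl.
 assert (0 <= Series (fun k => lam * lam^k * v ph (S k) 1)). 2: lra.
 apply Series_ge0. intros n. apply Rmult_le_pos. apply Rmult_le_pos; auto. apply pow_le; auto. apply (v_b ph L ph_c ph_b); auto; lra.
 apply (ex_series_incr_1 (fun n => lam^n * v ph n 1)). apply Vf_ex; lra. Qed.

End CV.

Section Main.
Variable psi : R -> R.
Variable dpsi : R -> R.
Hypothesis Hd : forall x, in01 x -> has_deriv_within in01 psi dpsi x.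
Hypothesis h0 : psi 0 = 0.
Hypothesis hpos : forall z, 0 < z < 1 -> 0 < psi z <= psi 1.

Lemma F1 : forall eps, 0 < eps -> exists del, 0 < del /\ forall y, 0 < y <= 1 -> y < del -> Rabs (psi y / y - dpsi 0) < eps.
Proof. intros eps He. destruct (lim_eps _ _ _ _ (Hd 0 ltac:(unfold in01; lra)) eps He) as [d [Hd0 H]].
 exists d; split; auto. intros y Hy Hyd. specialize (H y). rewrite h0, !Rminus_0_r in H. apply H.
 split. unfold in01; lra. lra. rewrite Rabs_right; lra. Qed.

Lemma F2 : forall r, 0 <= r <= 1 -> forall eps, 0 < eps -> exists del, 0 < del /\ forall y, 0 <= y <= 1 -> Rabs (y - r) < del -> Rabs (psi y - psi r) < eps.
Proof. intros r Hr eps He. destruct (lim_eps _ _ _ _ (Hd r Hr) 1 Rlt_0_1) as [d [Hd0 H]].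
 set (K := Rabs (dpsi r) + 1). assert (HK : 0 < K) by (unfold K; pose proof (Rabs_pos (dpsi r)); lra).
 exists (Rmin d (eps / K)). split. apply Rmin_pos; auto. apply Rdiv_lt_0_compat; lra.
 intros y Hy Hyr. destruct (Req_dec y r). subst. rewrite Rminus_diag, Rabs_R0; auto.
 assert (H1 : Rabs (y - r) < d) by (eapply Rlt_le_trans; [exact Hyr|apply Rmin_l]).
 assert (H2 : Rabs (y - r) < eps / K) by (eapply Rlt_le_trans; [exact Hyr|apply Rmin_r]).
 specialize (H y (conj Hy H0) H1).
 replace (psi y - psi r) with ((psi y - psi r) / (y - r) * (y - r)) by (field; lra).
 rewrite Rabs_mult.
 assert (Rabs ((psi y - psi r) / (y - r)) <= K).
 { unfold K. replace ((psi y - psi r) / (y - r)) with (((psi y - psi r) / (y - r) - dpsi r) + dpsi r) by ring.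
   eapply Rle_trans. apply Rabs_triang. lra. }
 apply Rle_lt_trans with (K * Rabs (y - r)). apply Rmult_le_compat_r; auto. apply Rabs_pos.
 apply (Rmult_lt_compat_l K) in H2; auto. replace (K * (eps / K)) with eps in H2 by (field; lra). auto.
Qed.

Definition ph := phi psi (dpsi 0).

Lemma ph_c : allc ph.
Proof. intros r. apply phi_cont. apply F1. apply F2. Qed.

Lemma psi1_pos : 0 < psi 1.
Proof. destruct (hpos (1/2)); lra. Qed.

Lemma d0_ge0 : 0 <= dpsi 0.
Proof. destruct (Rle_dec 0 (dpsi 0)); auto. exfalso.
 destruct (F1 (- dpsi 0)) as [d [Hd0 H]]. lra.
 set (y := Rmin (d/2) (1/2)). assert (0 < y) by (apply Rmin_pos; lra).
 assert (y <= 1/2) by apply Rmin_r. assert (y <= d/2) by apply Rmin_l.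
 specialize (H y ltac:(lra) ltac:(lra)). destruct (hpos y) as [hp _]. lra.
 assert (0 < psi y / y) by (apply Rdiv_lt_0_compat; lra).
 unfold Rabs in H; destruct Rcase_abs; lra. Qed.

Lemma ph_ge0 r : 0 <= ph r.
Proof. unfold ph, phi, phi1. destruct (clamp_in r) as [c1 c2]. destruct Rle_dec. apply d0_ge0.
 destruct (Req_dec (clamp r) 1) as [e|e]. rewrite e. pose proof psi1_pos. unfold Rdiv; rewrite Rinv_1; lra.
 left. apply Rdiv_lt_0_compat. apply hpos; lra. lra. Qed.

Lemma ph_pos r : 0 < r < 1 -> 0 < ph r.
Proof. intros Hr. unfold ph, phi, phi1. rewrite clamp_id by lra. destruct Rle_dec. lra. apply Rdiv_lt_0_compat. apply hpos; lra. lra. Qed.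

Lemma ph_clamp r : ph r = ph (clamp r).
Proof. unfold ph, phi. rewrite (clamp_id (clamp r)) by apply clamp_in. auto. Qed.

Definition LL := ph (proj1_sig (constructive_indefinite_description _ (continuity_ab_maj ph 0 1 ltac:(lra) ltac:(intros; apply ph_c)))).

Lemma ph_le r : ph r <= LL.
Proof. unfold LL. destruct constructive_indefinite_description as [Mx HM]. simpl. rewrite ph_clamp. apply (proj1 HM). apply clamp_in. Qed.

Lemma ph_b r : 0 <= ph r <= LL.
Proof. split. apply ph_ge0. apply ph_le. Qed.

Lemma ph_psi r : 0 < r <= 1 -> r * ph r = psi r.
Proof. intros. apply phi_psi; auto. Qed.

End Main.

Lemma lim_ext f g D l x0 : (forall y, D y -> f y = g y) -> limit1_in f D l x0 -> limit1_in g D l x0.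
Proof. intros He H. apply eps_lim. intros eps Hp. destruct (lim_eps _ _ _ _ H eps Hp) as [d [Hd H2]].
 exists d; split; auto. intros y Dy Hy. rewrite <- He; auto. Qed.

Lemma deriv_within (f : R -> R) D f' x : is_derive f x (f' x) -> has_deriv_within D f f' x.
Proof. intros H. apply is_derive_Reals in H. unfold has_deriv_within. apply eps_lim. intros eps He.
 destruct (H eps He) as [d Hd]. exists d. split. apply cond_pos. intros y [_ Hy] Hyx.
 specialize (Hd (y - x) ltac:(lra) Hyx). replace (x + (y - x)) with y in Hd by ring. auto. Qed.

Lemma within_deriv (f f' : R -> R) x : x < 0 -> has_deriv_within Defs.nonpos f f' x -> is_derive f x (f' x).
Proof. intros Hx H. apply is_derive_Reals. intros eps He. destruct (lim_eps _ _ _ _ H eps He) as [d [Hd H2]].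
 assert (0 < Rmin d (-x)) by (apply Rmin_pos; lra).
 exists (mkposreal _ H0). intros h Hh Hhd. simpl in Hhd.
 assert (Rabs h < d) by (eapply Rlt_le_trans; [exact Hhd|apply Rmin_l]).
 assert (Rabs h < -x) by (eapply Rlt_le_trans; [exact Hhd|apply Rmin_r]).
 specialize (H2 (x + h)). replace (x + h - x) with h in H2 by ring. apply H2; auto.
 split. unfold Defs.nonpos. unfold Rabs in H3; destruct Rcase_abs; lra. lra. Qed.

Lemma deriv_cont (f : R -> R) x l : is_derive f x l -> continuity_pt f x.
Proof. intros. apply c_cp. apply (ex_derive_continuous (K:=R_AbsRing) (V:=R_NormedModule)). eexists; eauto. Qed.

Section X.
Variable psi : R -> R.
Variable dpsi : R -> R.
Hypothesis Hd : forall x, in01 x -> has_deriv_within in01 psi dpsi x.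
Hypothesis h0 : psi 0 = 0.
Hypothesis hpos : forall z, 0 < z < 1 -> 0 < psi z <= psi 1.
Variable gm s : R.
Hypothesis hgm : 0 < gm.
Hypothesis hs : 0 < s.

Definition P := ph psi dpsi.
Definition L := LL psi dpsi Hd h0.
Lemma Pc : allc P. Proof. apply ph_c; auto. Qed.
Lemma Pb r : 0 <= P r <= L. Proof. apply ph_b; auto. Qed.
Definition k := s / gm.
Definition lam := k * k.
Lemma k_pos : 0 < k. Proof. unfold k; apply Rdiv_lt_0_compat; lra. Qed.
Lemma lam_ge : 0 <= lam. Proof. unfold lam; pose proof k_pos; nra. Qed.
Definition E x := exp (gm * x / s).
Definition c1 x := Cf P lam (E x).
Definition d1 x := k * Vf P lam (E x).
Definition x2 := k * ln 2.
Lemma x2_pos : 0 < x2.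
Proof. unfold x2. apply Rmult_lt_0_compat. apply k_pos. rewrite <- ln_1. apply ln_increasing; lra. Qed.

Lemma E_pos x : 0 < E x. Proof. apply exp_pos. Qed.
Lemma E_le1 x : x <= 0 -> E x <= 1.
Proof. intros. unfold E. rewrite <- exp_0. destruct (Req_dec x 0). subst. replace (gm*0/s) with 0 by (field; lra). lra.
 left. apply exp_increasing. unfold Rdiv. assert (gm * x < 0) by nra. assert (0 < /s) by (apply Rinv_0_lt_compat; lra). nra. Qed.
Lemma E_lt2 x : x < x2 -> E x < 2.
Proof. intros H. unfold E. rewrite <- (exp_ln 2) by lra. apply exp_increasing. unfold x2, k in H.
 apply (Rmult_lt_compat_l (gm/s)) in H. 2: apply Rdiv_lt_0_compat; lra.
 replace (gm / s * (s / gm * ln 2)) with (ln 2) in H by (field; lra). unfold Rdiv in *. lra. Qed.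
Lemma E_mono x y : x <= y -> E x <= E y.
Proof. intros. unfold E. destruct (Req_dec x y). subst; lra. left; apply exp_increasing. unfold Rdiv. apply Rmult_lt_compat_r.
 apply Rinv_0_lt_compat; lra. nra. Qed.
Lemma E_0 : E 0 = 1. Proof. unfold E. replace (gm*0/s) with 0 by (field; lra). apply exp_0. Qed.

Lemma E_deriv x : is_derive E x (gm / s * E x).
Proof. unfold E. auto_derive. auto. unfold Rdiv. ring. Qed.

Lemma c1_deriv x : x < x2 -> is_derive c1 x (d1 x).
Proof. intros Hx. pose proof (E_lt2 x Hx). pose proof (E_pos x).
 unfold c1. eapply is_derive_ext. intros t; reflexivity.
 replace (d1 x) with (scal (gm / s * E x) (lam * Series (fun n => lam^n * w P n (E x)))).
 apply (is_derive_comp (Cf P lam) E x). apply (Cf_deriv P L Pc Pb lam lam_ge). lra. apply E_deriv.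
 unfold scal; simpl; unfold mult; simpl. unfold d1. rewrite <- (Ser_w_v P lam (E x)) by lra. unfold lam, k. field. lra. Qed.

Definition dd1 x := P (E x) * E x * c1 x.
Lemma d1_deriv x : x < x2 -> is_derive d1 x (dd1 x).
Proof. intros Hx. pose proof (E_lt2 x Hx). pose proof (E_pos x).
 unfold d1. replace (dd1 x) with (k * (scal (gm / s * E x) (P (E x) * Cf P lam (E x)))).
 apply is_derive_scal. apply (is_derive_comp (Vf P lam) E x). apply (Vf_deriv P L Pc Pb lam lam_ge). lra. apply E_deriv.
 unfold scal; simpl; unfold mult; simpl. unfold dd1, c1, k. field. lra. Qed.

Lemma dd1_psi x : x <= 0 -> dd1 x = psi (E x) * c1 x.
Proof. intros. unfold dd1, P. rewrite <- (ph_psi psi dpsi (E x)). ring. split. apply E_pos. apply E_le1; auto. Qed.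

Lemma c1_cont x : x < x2 -> continuity_pt c1 x.
Proof. intros. apply c_cp. apply (ex_derive_continuous (K:=R_AbsRing) (V:=R_NormedModule)). eexists. apply c1_deriv; auto. Qed.
Lemma d1_cont x : x < x2 -> continuity_pt d1 x.
Proof. intros. apply c_cp. apply (ex_derive_continuous (K:=R_AbsRing) (V:=R_NormedModule)). eexists. apply d1_deriv; auto. Qed.

Lemma c1_ge1 x : x <= 0 -> 1 <= c1 x.
Proof. intros. unfold c1. apply (Cf_ge1 P L Pc Pb lam lam_ge). pose proof (E_pos x). pose proof (E_le1 x H). lra. Qed.
Lemma c1_mono x y : x <= y -> y <= 0 -> c1 x <= c1 y.
Proof. intros. unfold c1. apply (Cf_mono P L Pc Pb lam lam_ge). pose proof (E_pos x). pose proof (E_mono x y H). lra.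
 pose proof (E_le1 y H0). lra. Qed.
Lemma d1_ge0 x : x <= 0 -> 0 <= d1 x.
Proof. intros. unfold d1. apply Rmult_le_pos. pose proof k_pos; lra. apply (Vf_ge0 P L Pc Pb lam lam_ge).
 pose proof (E_pos x). pose proof (E_le1 x H). lra. Qed.
Lemma c1_le0 x : x <= 0 -> c1 x <= c1 0.
Proof. intros. apply c1_mono; lra. Qed.

Definition A0 := d1 0 / c1 0.

Lemma v01_pos : 0 < v P 0 1.
Proof. unfold v. apply RInt_gt_0. lra. intros x Hx. simpl. rewrite Rmult_1_r. unfold P. apply ph_pos; auto.
 intros x _. apply cp_c. apply allc_mult. apply Pc. apply allc_const. Qed.

Lemma A0_pos : 0 < A0.
Proof. unfold A0. apply Rdiv_lt_0_compat. unfold d1. rewrite E_0. apply Rmult_lt_0_compat. apply k_pos.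
 pose proof (Vf_1_ge P L Pc Pb lam lam_ge). pose proof v01_pos. lra. pose proof (c1_ge1 0). lra. Qed.

Lemma A0_int : A0 <= k * v P 0 1.
Proof. unfold A0, d1, c1. rewrite E_0. pose proof (Vf_1_le P L Pc Pb lam lam_ge).
 pose proof (Cf_ge1 P L Pc Pb lam lam_ge 1 ltac:(lra)). pose proof k_pos.
 apply (Rmult_le_reg_r (Cf P lam 1)). lra. unfold Rdiv. rewrite Rmult_assoc, Rinv_l, Rmult_1_r by lra.
 rewrite Rmult_assoc. apply Rmult_le_compat_l; lra. Qed.

Lemma isd_mul (f g : R -> R) (x df dg : R) : is_derive f x df -> is_derive g x dg -> is_derive (fun t => f t * g t) x (df * g x + f x * dg).
Proof. intros. apply (is_derive_mult f g x df dg); auto. intros; apply Rmult_comm. Qed.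
Lemma isd_sub (f g : R -> R) (x df dg : R) : is_derive f x df -> is_derive g x dg -> is_derive (fun t => f t - g t) x (df - dg).
Proof. intros. apply (is_derive_minus (K:=R_AbsRing) (V:=R_NormedModule) f g x df dg); auto. Qed.
Lemma isd_add (f g : R -> R) (x df dg : R) : is_derive f x df -> is_derive g x dg -> is_derive (fun t => f t + g t) x (df + dg).
Proof. intros. apply (is_derive_plus (K:=R_AbsRing) (V:=R_NormedModule) f g x df dg); auto. Qed.
Lemma isd_cmul (f : R -> R) (x k0 df : R) : is_derive f x df -> is_derive (fun t => k0 * f t) x (k0 * df).
Proof. intros. apply is_derive_scal; auto. Qed.
Lemma isd_val (f : R -> R) (x d d' : R) : is_derive f x d -> d = d' -> is_derive f x d'.
Proof. intros; subst; auto. Qed.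

Definition En x := d1 x * d1 x - psi 1 * (c1 x * c1 x).

Lemma En_deriv t : t < x2 -> is_derive En t (2 * d1 t * c1 t * (P (E t) * E t - psi 1)).
Proof. intros Ht. eapply isd_val. apply isd_sub. apply isd_mul; apply d1_deriv; auto.
 apply isd_cmul. apply isd_mul; apply c1_deriv; auto. unfold dd1. ring. Qed.

Lemma En_mono x : x <= 0 -> En 0 <= En x.
Proof. intros Hx. destruct (Req_dec x 0). subst; lra. pose proof x2_pos.
 destruct (MVT_gen En x 0 (fun t => 2 * d1 t * c1 t * (P (E t) * E t - psi 1))) as [c [Hc He]].
 - intros t Ht. rewrite Rmin_left, Rmax_right in Ht by lra. apply En_deriv. lra.
 - intros t Ht. rewrite Rmin_left, Rmax_right in Ht by lra. apply c_cp. apply (ex_derive_continuous (K:=R_AbsRing) (V:=R_NormedModule)).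
   eexists. apply En_deriv. lra.
 - rewrite Rmin_left, Rmax_right in Hc by lra.
   assert (P (E c) * E c - psi 1 <= 0).
   { unfold P. rewrite Rmult_comm, (ph_psi psi dpsi). 2: split; [apply E_pos|apply E_le1; lra].
     destruct (Req_dec (E c) 1) as [e|e]. rewrite e; lra. pose proof (E_le1 c ltac:(lra)). pose proof (E_pos c).
     destruct (hpos (E c)); lra. }
   pose proof (d1_ge0 c ltac:(lra)). pose proof (c1_ge1 c ltac:(lra)).
   assert (0 <= 2 * d1 c * c1 c) by nra.
   assert (2 * d1 c * c1 c * (P (E c) * E c - psi 1) * (0 - x) <= 0).
   { apply Rmult_le_0_r. apply Rmult_le_0_l; auto. lra. }
   lra.
Qed.

Lemma A0_sqrt : A0 <= sqrt (psi 1).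
Proof.
 pose proof (psi1_pos psi hpos) as P1. pose proof k_pos. pose proof (Cf_ge1 P L Pc Pb lam lam_ge 1 ltac:(lra)).
 pose proof (L_ge0 P L Pb).
 set (C1 := Cf P lam 1) in *.
 set (nu := Rmin 1 (sqrt (psi 1) / (k * L * C1 + 1))).
 assert (Hnu : 0 < nu <= 1). { split. apply Rmin_pos. lra. apply Rdiv_lt_0_compat. apply sqrt_lt_R0; auto.
   assert (0 <= k * L * C1) by (apply Rmult_le_pos; [apply Rmult_le_pos|]; lra). lra. apply Rmin_l. }
 set (x := k * ln nu).
 assert (Ex : E x = nu). { unfold E, x, k. replace (gm * (s / gm * ln nu) / s) with (ln nu) by (field; lra). apply exp_ln; lra. }
 assert (Hx : x <= 0). { unfold x. assert (ln nu <= 0) by (rewrite <- ln_1; apply ln_le; lra). nra. }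
 assert (Hd1 : d1 x <= sqrt (psi 1)).
 { unfold d1. rewrite Ex. pose proof (Vf_small P L Pc Pb lam lam_ge nu ltac:(lra)) as HV. fold C1 in HV.
   apply Rle_trans with (k * (nu * L * C1)). apply Rmult_le_compat_l; lra.
   assert (nu <= sqrt (psi 1) / (k * L * C1 + 1)) by apply Rmin_r.
   assert (0 <= k * L * C1) by (apply Rmult_le_pos; [apply Rmult_le_pos|]; lra).
   apply Rle_trans with ((k * L * C1) * (sqrt (psi 1) / (k * L * C1 + 1))).
   replace (k * (nu * L * C1)) with ((k * L * C1) * nu) by ring. apply Rmult_le_compat_l; auto.
   pose proof (sqrt_lt_R0 (psi 1) P1).
   apply (Rmult_le_reg_r (k * L * C1 + 1)). lra. replace (k*L*C1 * (sqrt (psi 1) / (k*L*C1+1)) * (k*L*C1+1)) with (k*L*C1 * sqrt (psi 1)) by (field; lra). nra. }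
 pose proof (d1_ge0 x Hx). pose proof (c1_ge1 x Hx).
 assert (En x <= 0). { unfold En. pose proof (sqrt_sqrt (psi 1) ltac:(lra)). assert (d1 x * d1 x <= sqrt (psi 1) * sqrt (psi 1)) by (apply Rmult_le_compat; lra). assert (1 <= c1 x * c1 x) by nra. nra. }
 pose proof (En_mono x Hx). unfold En in *.
 pose proof (d1_ge0 0 ltac:(lra)). pose proof (c1_ge1 0 ltac:(lra)).
 assert (A0 * A0 <= psi 1).
 { unfold A0. replace (d1 0 / c1 0 * (d1 0 / c1 0)) with ((d1 0 * d1 0) / (c1 0 * c1 0)) by (field; lra).
   apply (Rmult_le_reg_r (c1 0 * c1 0)). nra. unfold Rdiv. rewrite Rmult_assoc, Rinv_l, Rmult_1_r by nra. lra. }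
 pose proof A0_pos. rewrite <- (sqrt_square A0) by lra. apply sqrt_le_1_alt. auto.
Qed.

Lemma c1_ge1' x : x < x2 -> 1 <= c1 x.
Proof. intros. unfold c1. apply (Cf_ge1 P L Pc Pb lam lam_ge). pose proof (E_pos x). pose proof (E_lt2 x H). lra. Qed.

Definition hI t := / (c1 t * c1 t).
Lemma hI_cont t : t < x2 -> continuity_pt hI t.
Proof. intros. unfold hI. apply continuity_pt_inv. apply continuity_pt_mult; apply c1_cont; auto.
 pose proof (c1_ge1' t H). nra. Qed.

Definition II x := RInt hI x 0.

Lemma hI_ex a0 b0 : a0 < x2 -> b0 < x2 -> ex_RInt hI a0 b0.
Proof. intros. apply (ex_RInt_continuous (V:=R_CompleteNormedModule)). intros z Hz. apply cp_c, hI_cont.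
 unfold Rmin, Rmax in Hz; destruct Rle_dec; lra. Qed.

Lemma II_deriv x : x < x2 -> is_derive II x (- hI x).
Proof. intros Hx. pose proof x2_pos.
 apply (is_derive_RInt' hI II x 0).
 exists (mkposreal (x2 - x) ltac:(lra)). intros y Hy. change (Rabs (y - x) < x2 - x) in Hy.
 apply (RInt_correct (V:=R_CompleteNormedModule)). apply hI_ex. unfold Rabs in Hy; destruct Rcase_abs; lra. lra.
 apply cp_c, hI_cont; auto. Qed.

Lemma II_0 : II 0 = 0.
Proof. apply (RInt_point (V:=R_CompleteNormedModule)). Qed.

Lemma inv_c1_deriv x : x < x2 -> is_derive (fun t => / c1 t) x (- d1 x / c1 x ^ 2).
Proof. intros. apply is_derive_inv. apply c1_deriv; auto. pose proof (c1_ge1' x H); lra. Qed.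

Lemma existence c0 c0' : exists c, cauchy_sol psi gm s c0 c0' c.
Proof.
 pose proof x2_pos. pose proof (c1_ge1 0 ltac:(lra)) as H1.
 set (al := c0 / c1 0). set (be := c1 0 * (al * d1 0 - c0')).
 exists (fun x => al * c1 x + be * (c1 x * II x)).
 exists (fun x => al * d1 x + be * (d1 x * II x - / c1 x)).
 exists (fun x => psi (exp (gm * x / s)) * (al * c1 x + be * (c1 x * II x))).
 split; [|split; [|split; [|split]]].
 - intros x Hx. apply deriv_within. eapply isd_val. apply isd_add. apply isd_cmul, c1_deriv; lra.
   apply isd_cmul, isd_mul. apply c1_deriv; lra. apply II_deriv; lra.
   unfold hI. field. pose proof (c1_ge1 x Hx). lra.
 - intros x Hx. apply is_derive_Reals. eapply isd_val. apply isd_add. apply isd_cmul, d1_deriv; lra.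
   apply isd_cmul, isd_sub. apply isd_mul. apply d1_deriv; lra. apply II_deriv; lra. apply inv_c1_deriv; lra.
   change (exp (gm * x / s)) with (E x). unfold dd1. rewrite <- (ph_psi psi dpsi (E x)) by (split; [apply E_pos|apply E_le1; lra]). unfold hI, P. field. pose proof (c1_ge1 x ltac:(lra)). lra.
 - intros x Hx. lra.
 - simpl. rewrite II_0. unfold al. field. lra.
 - simpl. rewrite II_0. unfold be, al. field. lra.
Qed.

Section Char.
Variables c0 c0' : R.
Hypothesis hc0 : 0 < c0.
Variables c dc ddc : R -> R.
Hypothesis Hc1 : forall x, x <= 0 -> has_deriv_within Defs.nonpos c dc x.
Hypothesis Hc2 : forall x, x < 0 -> derivable_pt_lim dc x (ddc x).
Hypothesis Hc3 : forall x, x < 0 -> - ddc x + psi (exp (gm * x / s)) * c x = 0.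
Hypothesis Hc4 : c 0 = c0.
Hypothesis Hc5 : dc 0 = c0'.

Definition Wr x := c1 x * dc x - c x * d1 x.
Definition u x := c x / c1 x.
Definition MM := c1 0.
Lemma MM_ge1 : 1 <= MM. Proof. apply c1_ge1; lra. Qed.

Lemma c_der x : x < 0 -> is_derive c x (dc x).
Proof. intros. apply within_deriv; auto. apply Hc1; lra. Qed.

Lemma Wr_der x : x < 0 -> is_derive Wr x 0.
Proof. intros Hx. pose proof x2_pos. eapply isd_val. apply isd_sub; apply isd_mul.
 apply c1_deriv; lra. apply is_derive_Reals, Hc2; auto. apply c_der; auto. apply d1_deriv; lra.
 rewrite dd1_psi by lra. specialize (Hc3 x Hx). change (exp (gm * x / s)) with (E x) in Hc3.
 replace (ddc x) with (psi (E x) * c x) by lra. ring. Qed.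

Lemma Wr_const x : x < 0 -> Wr x = Wr (-1).
Proof. intros Hx. destruct (Req_dec x (-1)). subst; auto.
 destruct (MVT_gen Wr x (-1) (fun _ => 0)) as [z [Hz He]].
 - intros t Ht. apply Wr_der. unfold Rmin, Rmax in Ht; destruct Rle_dec; lra.
 - intros t Ht. apply (deriv_cont _ _ 0). apply Wr_der. unfold Rmin, Rmax in Ht; destruct Rle_dec; lra.
 - lra. Qed.

Definition W0 := Wr (-1).

Lemma u_der x : x < 0 -> is_derive u x (W0 / (c1 x * c1 x)).
Proof. intros Hx. pose proof x2_pos. pose proof (c1_ge1 x ltac:(lra)).
 eapply isd_val. apply is_derive_div. apply c_der; auto. apply c1_deriv; lra. lra.
 unfold W0. rewrite <- (Wr_const x Hx). unfold Wr. field. lra. Qed.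

Lemma u_mvt y z : y < z -> z < 0 -> exists xi, y <= xi <= z /\ u z - u y = W0 / (c1 xi * c1 xi) * (z - y).
Proof. intros Hyz Hz. destruct (MVT_gen u y z (fun t => W0 / (c1 t * c1 t))) as [xi [Hxi He]].
 - intros t Ht. apply u_der. unfold Rmin, Rmax in Ht; destruct Rle_dec; lra.
 - intros t Ht. eapply deriv_cont. apply u_der. unfold Rmin, Rmax in Ht; destruct Rle_dec; lra.
 - exists xi. split; auto. rewrite Rmin_left, Rmax_right in Hxi; lra. Qed.

Lemma u_mvt_bounds y z : y < z -> z < 0 ->
  Rabs (u z - u y) >= Rabs W0 / (MM * MM) * (z - y) /\ (0 < W0 -> u z - u y > 0) /\ (W0 < 0 -> u z - u y < 0).
Proof. intros Hyz Hz. destruct (u_mvt y z Hyz Hz) as [xi [Hxi He]]. rewrite He.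
 pose proof (c1_ge1 xi ltac:(lra)). pose proof (c1_le0 xi ltac:(lra)). fold MM in H0.
 assert (Hq : / (MM * MM) <= / (c1 xi * c1 xi)). { apply Rinv_le_contravar. nra. apply Rmult_le_compat; lra. }
 assert (0 < / (c1 xi * c1 xi)) by (apply Rinv_0_lt_compat; nra).
 split; [|split].
 - rewrite Rabs_mult, Rabs_div by nra. rewrite (Rabs_right (c1 xi * c1 xi)) by nra. rewrite (Rabs_right (z - y)) by lra.
   apply Rle_ge. apply Rmult_le_compat_r. lra. unfold Rdiv. apply Rmult_le_compat_l. apply Rabs_pos. auto.
 - intros. apply Rmult_gt_0_compat; [|lra]. unfold Rdiv. apply Rmult_gt_0_compat; lra.
 - intros. assert (W0 / (c1 xi * c1 xi) < 0). { unfold Rdiv. nra. } nra.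
Qed.

Definition D0 y := Defs.nonpos y /\ y <> 0.
Definition Lu := (c0' * c1 0 - c0 * d1 0) / (c1 0 * c1 0).

Lemma u_ldiff : limit1_in (fun y => (u y - u 0) / (y - 0)) D0 Lu 0.
Proof. pose proof x2_pos.
 assert (Hc : limit1_in (fun y => (c y - c 0) / (y - 0)) D0 c0' 0). { rewrite <- Hc5. apply Hc1. lra. }
 assert (H1 : limit1_in (fun y => (c1 y - c1 0) / (y - 0)) D0 (d1 0) 0). { apply (deriv_within c1 _ d1). apply c1_deriv; lra. }
 assert (H2 : limit1_in c1 D0 (c1 0) 0). { pose proof (c1_cont 0 ltac:(lra)) as Hk. apply eps_lim. intros eps He.
   destruct (cont_eps _ _ Hk eps He) as [d [Hdd Hh]]. exists d; split; auto. }
 assert (H3 := limit_minus _ _ D0 _ _ 0 (limit_mul _ _ D0 _ _ 0 Hc (limit_free (fun _ => c1 0) D0 0 0))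
          (limit_mul _ _ D0 _ _ 0 (limit_free (fun _ => c 0) D0 0 0) H1)).
 assert (H4 := limit_inv _ D0 _ 0 (limit_mul _ _ D0 _ _ 0 H2 (limit_free (fun _ => c1 0) D0 0 0))).
 pose proof (c1_ge1 0 ltac:(lra)).
 specialize (H4 ltac:(nra)). assert (H5 := limit_mul _ _ D0 _ _ 0 H3 H4). simpl in H5.
 unfold Lu. rewrite Hc4 in H5. replace ((c0' * c1 0 - c0 * d1 0) / (c1 0 * c1 0)) with ((c0' * c1 0 - c0 * d1 0) * / (c1 0 * c1 0)) by reflexivity.
 eapply lim_ext; [|exact H5]. intros y [Dy1 Dy2]. unfold Defs.nonpos in Dy1.
 pose proof (c1_ge1 y Dy1). unfold u. rewrite Hc4. field. repeat split; lra.
Qed.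

Lemma u_ldiff_eps eps : 0 < eps -> exists d, 0 < d /\ forall y, -d < y < 0 -> Rabs ((u y - u 0) / y - Lu) < eps.
Proof. intros He. destruct (lim_eps _ _ _ _ u_ldiff eps He) as [d [Hdd H]]. exists d. split; auto.
 intros y Hy. specialize (H y). cbv beta in H. replace (y - 0) with y in H by ring. apply H. split. unfold Defs.nonpos; lra. lra.
 unfold Rabs; destruct Rcase_abs; lra. Qed.

Lemma u_lcont eps : 0 < eps -> exists d, 0 < d /\ forall y, -d < y < 0 -> Rabs (u y - u 0) < eps.
Proof. intros He. destruct (u_ldiff_eps 1 Rlt_0_1) as [d [Hdd H]].
 exists (Rmin d (eps / (Rabs Lu + 1))). split. apply Rmin_pos; auto. apply Rdiv_lt_0_compat; auto. pose proof (Rabs_pos Lu); lra.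
 intros y Hy. assert (-d < y < 0). { split; try lra. assert (Rmin d (eps / (Rabs Lu + 1)) <= d) by apply Rmin_l. lra. }
 assert (Hy2 : -y < eps / (Rabs Lu + 1)). { assert (Rmin d (eps / (Rabs Lu + 1)) <= eps / (Rabs Lu + 1)) by apply Rmin_r. lra. }
 specialize (H y H0).
 replace (u y - u 0) with (((u y - u 0) / y) * y) by (field; lra).
 rewrite Rabs_mult. rewrite (Rabs_left y) by lra.
 assert (Rabs ((u y - u 0) / y) <= Rabs Lu + 1).
 { replace ((u y - u 0) / y) with (((u y - u 0) / y - Lu) + Lu) by ring. eapply Rle_trans. apply Rabs_triang. lra. }
 apply Rle_lt_trans with ((Rabs Lu + 1) * (-y)). apply Rmult_le_compat_r; lra.
 apply (Rmult_lt_compat_l (Rabs Lu + 1)) in Hy2. 2: pose proof (Rabs_pos Lu); lra.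
 replace ((Rabs Lu + 1) * (eps / (Rabs Lu + 1))) with eps in Hy2 by (field; pose proof (Rabs_pos Lu); lra). lra.
Qed.

Lemma K1 : W0 = 0 -> (forall y, y <= 0 -> u y = u 0) /\ Lu = 0.
Proof. intros HW.
 assert (Hc : forall y, y < 0 -> u y = u (-1)).
 { intros y Hy. destruct (Req_dec y (-1)). subst; auto. destruct (Rlt_dec y (-1)).
   - destruct (u_mvt y (-1)) as [xi [_ He]]; auto. lra. rewrite HW in He. unfold Rdiv in He. lra.
   - destruct (u_mvt (-1) y) as [xi [_ He]]; auto. lra. rewrite HW in He. unfold Rdiv in He. lra. }
 assert (H0 : u 0 = u (-1)).
 { apply Rminus_diag_uniq. apply Rabs_eq_0. apply Rle_antisym; [|apply Rabs_pos].
   apply le_epsilon. intros eps He. destruct (u_lcont eps He) as [d [Hdd H]].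
   set (y := Rmax (-d/2) (-1/2)). assert (-d < y < 0) by (unfold y, Rmax; destruct Rle_dec; lra).
   specialize (H y H0). rewrite Hc in H by lra. rewrite Rabs_minus_sym. lra. }
 split. intros y Hy. destruct (Req_dec y 0). subst; auto. rewrite Hc, H0 by lra. auto.
 apply Rabs_eq_0. apply Rle_antisym; [|apply Rabs_pos]. apply le_epsilon. intros eps He.
 destruct (u_ldiff_eps eps He) as [d [Hdd H]].
 set (y := Rmax (-d/2) (-1/2)). assert (Hyy : -d < y < 0) by (unfold y, Rmax; destruct Rle_dec; lra).
 specialize (H y Hyy). rewrite Hc, <- H0 in H by lra. replace ((u 0 - u 0) / y - Lu) with (- Lu) in H by (field; lra).
 rewrite Rabs_Ropp in H. lra.
Qed.

Lemma K2 : W0 <> 0 -> Lu <> 0.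
Proof. intros HW HL. set (m := Rabs W0 / (MM * MM)). pose proof MM_ge1 as HM1.
 assert (Hm : 0 < m). { unfold m. apply Rdiv_lt_0_compat. apply Rabs_pos_lt; auto. nra. }
 destruct (u_ldiff_eps (m/4)) as [d [Hdd H]]. lra.
 set (y := Rmax (-d/2) (-1/2)). assert (Hy : -d < y < 0) by (unfold y, Rmax; destruct Rle_dec; lra).
 destruct (u_lcont (m * (-y) / 4)) as [d2 [Hdd2 H2]]. apply Rdiv_lt_0_compat; [apply Rmult_lt_0_compat|]; lra.
 set (z := Rmax (y/2) (-d2/2)). assert (Hz : y < z < 0 /\ -d2 < z /\ y / 2 <= z) by (unfold z, Rmax; destruct Rle_dec; lra).
 destruct (u_mvt_bounds y z) as [Hb _]; try lra. fold m in Hb.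
 specialize (H2 z ltac:(lra)). specialize (H y Hy). rewrite HL, Rminus_0_r in H.
 rewrite Rabs_div in H by lra. rewrite (Rabs_left y) in H by lra.
 apply (Rmult_lt_compat_r (-y)) in H; [|lra]. unfold Rdiv in H. rewrite Rmult_assoc, Rinv_l, Rmult_1_r in H by lra.
 assert (Rabs (u z - u y) <= Rabs (u y - u 0) + Rabs (u z - u 0)).
 { replace (u z - u y) with ((u z - u 0) - (u y - u 0)) by ring. eapply Rle_trans. apply Rabs_triang. rewrite Rabs_Ropp. lra. }
 assert (m * (z - y) >= m * (-y) / 2). { assert (z - y >= -y/2) by lra. nra. }
 lra.
Qed.

Lemma c_eq_u x : x <= 0 -> c x = c1 x * u x.
Proof. intros. unfold u. pose proof (c1_ge1 x H). field. lra. Qed.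

Lemma K3 : nonneg_nondecr_on_nonpos c -> W0 = 0.
Proof. intros [Hnn Hnd]. pose proof MM_ge1. set (m := Rabs W0 / (MM * MM)).
 destruct (Req_dec W0 0) as [e|e]; auto. exfalso.
 assert (Hm : 0 < m). { unfold m. apply Rdiv_lt_0_compat. apply Rabs_pos_lt; auto. nra. }
 destruct (Rlt_dec 0 W0) as [Wp|Wn].
 - set (y := -1 - (Rabs (u (-1)) + 1) / m).
   assert (Hy : y < -1). { unfold y. assert (0 < (Rabs (u (-1)) + 1) / m) by (apply Rdiv_lt_0_compat; auto; pose proof (Rabs_pos (u (-1))); lra). lra. }
   destruct (u_mvt_bounds y (-1)) as [Hb [Hp _]]; try lra. fold m in Hb. specialize (Hp Wp).
   rewrite Rabs_right in Hb by lra.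
   assert (m * (-1 - y) = Rabs (u (-1)) + 1) by (unfold y; field; lra).
   assert (u y < 0) by (pose proof (Rle_abs (u (-1))); lra).
   pose proof (Hnn y ltac:(lra)). rewrite c_eq_u in H2 by lra. pose proof (c1_ge1 y ltac:(lra)). nra.
 - assert (Wneg : W0 < 0) by lra.
   set (y := -1 - (Rabs (u (-1)) + c0 + 1) / m).
   assert (Hy : y < -1). { unfold y. assert (0 < (Rabs (u (-1)) + c0 + 1) / m) by (apply Rdiv_lt_0_compat; auto; pose proof (Rabs_pos (u (-1))); lra). lra. }
   destruct (u_mvt_bounds y (-1)) as [Hb [_ Hn]]; try lra. fold m in Hb. specialize (Hn Wneg).
   rewrite Rabs_left in Hb by lra.
   assert (m * (-1 - y) = Rabs (u (-1)) + c0 + 1) by (unfold y; field; lra).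
   assert (u y >= c0 + 1) by (pose proof (Rle_abs (- u (-1))); rewrite Rabs_Ropp in H1; lra).
   pose proof (Hnd y 0 ltac:(lra) ltac:(lra)). rewrite Hc4 in H2. rewrite c_eq_u in H2 by lra.
   pose proof (c1_ge1 y ltac:(lra)). nra.
Qed.

Lemma K4 : W0 = 0 -> nonneg_nondecr_on_nonpos c.
Proof. intros HW. destruct (K1 HW) as [Hu _].
 assert (Hu0 : 0 < u 0). { unfold u. rewrite Hc4. apply Rdiv_lt_0_compat; auto. pose proof (c1_ge1 0); lra. }
 split.
 - intros x Hx. rewrite c_eq_u, Hu by auto. pose proof (c1_ge1 x Hx). nra.
 - intros x y Hxy Hy. rewrite (c_eq_u x), (c_eq_u y), (Hu x), (Hu y) by lra. pose proof (c1_mono x y Hxy Hy). nra.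
Qed.

Lemma char : nonneg_nondecr_on_nonpos c <-> c0' = A0 * c0.
Proof. pose proof (c1_ge1 0 ltac:(lra)).
 assert (HL : Lu = 0 <-> c0' = A0 * c0).
 { unfold Lu, A0. split; intros Hq.
   - apply (Rmult_eq_compat_r (c1 0 * c1 0)) in Hq. unfold Rdiv in Hq. rewrite Rmult_0_l, Rmult_assoc, Rinv_l, Rmult_1_r in Hq by nra.
     apply (Rmult_eq_reg_r (c1 0)). 2: lra. field_simplify. lra. lra.
   - rewrite Hq. field. lra. }
 split.
 - intros H0. apply HL. apply K1, K3; auto.
 - intros H0. apply K4. destruct (Req_dec W0 0); auto. exfalso. apply (K2 H1). apply HL; auto.
Qed.

End Char.

End X.

Theorem lemma3p1 (gm : R) (psi : R -> R)
  (hgm : 0 < gm)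
  (hC1 : C1_on_01 psi)
  (h0 : psi 0 = 0)
  (hpos : forall z, 0 < z < 1 -> 0 < psi z <= psi 1) :
  exists A : R -> R,
    (forall s, 0 < s -> continuity_pt A s) /\
    (forall s, 0 < s -> 0 < A s <= sqrt (psi 1)) /\
    (forall s c0 c0', 0 < s -> 0 < c0 ->
       (exists c, cauchy_sol psi gm s c0 c0' c) /\
       (forall c, cauchy_sol psi gm s c0 c0' c ->
          (nonneg_nondecr_on_nonpos c <-> c0' = A s * c0))) /\
    (exists pr : Riemann_integrable (fun v => psi v / v) 0 1,
       forall s, 0 < s -> A s <= s / gm * RiemannInt pr) /\
    A 0 = 0 /\
    limit1_in A (fun s => 0 < s) 0 0.
Proof.
destruct hC1 as [dpsi [Hd _]].
set (Q := P psi dpsi). set (LQ := L psi dpsi Hd h0).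
assert (Qc : allc Q) by (apply Pc; auto). assert (Qb : forall r, 0 <= Q r <= LQ) by (apply Pb; auto).
pose proof (L_ge0 Q LQ Qb) as LQ0.
set (Af := fun s => s / gm * PSeries (fun n => v Q n 1) ((s/gm)^2) / PSeries (fun n => a Q n 1) ((s/gm)^2)).
assert (Aeq : forall s, 0 < s -> Af s = A0 psi dpsi gm s).
{ intros s hs. unfold Af, A0, d1, c1, Vf, Cf. rewrite (E_0 gm s hs). unfold lam, k.
  replace ((s/gm)^2) with (s/gm * (s/gm)) by ring. fold Q. unfold Rdiv. ring. }
assert (Hden : forall s, 1 <= PSeries (fun n => a Q n 1) ((s/gm)^2)).
{ intros s. apply (Cf_ge1 Q LQ Qc Qb). apply pow2_ge_0. lra. }
assert (Rad_a : forall x, Rbar_lt (Rabs x) (CV_radius (fun n => a Q n 1))).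
{ apply (radius_inf _ 1 LQ LQ0). intros n. rewrite Rabs_right by (apply Rle_ge, (a_ge0 Q LQ Qc Qb); lra).
  rewrite Rmult_1_l. replace (LQ^n) with ((LQ*1)^n) by (f_equal; ring). apply (a_le Q LQ Qc Qb). lra. }
assert (Rad_v : forall x, Rbar_lt (Rabs x) (CV_radius (fun n => v Q n 1))).
{ apply (radius_inf _ LQ LQ LQ0). intros n. destruct (v_b Q LQ Qc Qb n 1) as [h1 h2]. lra.
  rewrite Rabs_right by lra. eapply Rle_trans. exact h2. rewrite Rmult_1_l. apply Rmult_le_compat_l; auto.
  replace (LQ^n) with ((LQ*1)^n) by (f_equal; ring). apply (a_le Q LQ Qc Qb). lra. }
assert (Acont : forall s, continuity_pt Af s).
{ intros s. unfold Af.
  assert (Hg : continuity_pt (fun s => (s/gm)^2) s).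
  { apply c_cp. apply (ex_derive_continuous (K:=R_AbsRing) (V:=R_NormedModule)). auto_derive. lra. }
  assert (H1 : continuity_pt (fun s => PSeries (fun n => v Q n 1) ((s/gm)^2)) s).
  { apply (continuity_pt_comp (fun s => (s/gm)^2) (PSeries (fun n => v Q n 1))); auto. apply PSeries_continuity; auto. }
  assert (H2 : continuity_pt (fun s => PSeries (fun n => a Q n 1) ((s/gm)^2)) s).
  { apply (continuity_pt_comp (fun s => (s/gm)^2) (PSeries (fun n => a Q n 1))); auto. apply PSeries_continuity; auto. }
  assert (H3 : continuity_pt (fun s => s / gm) s).
  { apply c_cp. apply (ex_derive_continuous (K:=R_AbsRing) (V:=R_NormedModule)). auto_derive. lra. }
  apply continuity_pt_div. apply continuity_pt_mult; auto. auto. specialize (Hden s). lra. }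
assert (A00 : Af 0 = 0) by (unfold Af; unfold Rdiv; ring).
exists Af. split; [|split; [|split; [|split; [|split]]]].
- intros; auto.
- intros s hs. rewrite (Aeq s hs). split. apply (A0_pos psi dpsi Hd h0 hpos gm s hgm hs). apply (A0_sqrt psi dpsi Hd h0 hpos gm s hgm hs).
- intros s c0 c0' hs hc0. split. apply (existence psi dpsi Hd h0 hpos gm s hgm hs).
  intros c [dc [ddc [H1 [H2 [H3 [H4 H5]]]]]]. rewrite (Aeq s hs). eapply char; eauto.
- assert (Hex : ex_RInt (fun r => psi r / r) 0 1).
  { apply (ex_RInt_ext (fun r => Q r * a Q 0 r)). intros x Hx. rewrite Rmin_left, Rmax_right in Hx by lra.
    simpl. unfold Q, P. rewrite <- (ph_psi psi dpsi x) by lra. field. lra. apply exRI. apply pa_cont; auto. }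
  exists (ex_RInt_Reals_0 _ _ _ Hex). intros s hs. rewrite <- RInt_Reals.
  rewrite (Aeq s hs). eapply Rle_trans. apply A0_int; auto. unfold k. fold Q.
  right. f_equal. unfold v. apply RInt_ext. intros x Hx. rewrite Rmin_left, Rmax_right in Hx by lra.
  simpl. unfold Q, P. rewrite <- (ph_psi psi dpsi x) by lra. field. lra.
- auto.
- apply eps_lim. intros eps He. destruct (cont_eps _ _ (Acont 0) eps He) as [d [Hd0 H]].
  exists d. split; auto. intros y _ Hy. rewrite <- A00. apply H; auto.
Qed.
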